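(* Let $G$ be the $3$-uniform tight cycle ($k=3$, $s=2$) with $n$ vertices. Then the maximum degree of $G$ is $\Delta=3$. When $n=4$, $\lambda(\mathcal{L})=4$. When $n\ge 5$, $\lambda(\mathcal{L})\le\Delta+1.5=4.5$.
   Context: A $k$-uniform $s$-cycle with $m$ edges has vertex set $\mathbb{Z}_n$, $n=m(k-s)$ (vertex $n+i$ identified with $i$), and edges $e_j=\{j(k-s)+1,\ldots,j(k-s)+k\}$, $j=0,\ldots,m-1$; it is assumed that $n\ge 2k-s$. For $k=3,s=2$ this means vertex set $\mathbb{Z}_n$, $n\ge 4$, with edges $\{j+1,j+2,j+3\}$ for $j=0,\ldots,n-1$. The degree $d_i$ of a vertex is the number of edges containing it. A Laplacian H-eigenvalue of $G$ is a real $\lambda$ for which there exists $\mathbf{x}\in\mathbb{R}^n\setminus\{0\}$ with $\lambda x_i^{k-1}=d_ix_i^{k-1}-\sum_{e\ni i}\prod_{j\in e\setminus\{i\}}x_j$ for all $i$ (equivalently, an H-eigenvalue of the Laplacian tensor $\mathcal{L}=\mathcal{D}-\mathcal{A}$, with $\mathcal{A}$ the adjacency tensor having entries $1/(k-1)!$ on edges and $\mathcal{D}$ the diagonal degree tensor); $\lambda(\mathcal{L})$ is the largest Laplacian H-eigenvalue. *)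

(* Defs.v *)
From mathcomp Require Import all_boot all_order all_algebra.
From mathcomp Require Import reals.
Set Implicit Arguments. Unset Strict Implicit. Unset Printing Implicit Defensive.
Import Order.TTheory GRing.Theory Num.Theory.
Local Open Scope ring_scope.

Definition scycle_edge (k s n j : nat) : {set 'I_n} :=
  [set v : 'I_n | [exists t : 'I_k, ((j * (k - s) + t.+1) %% n)%N == (v : nat)]].

(* Edge set of the k-uniform s-cycle with m edges on n = m(k-s) vertices. *)
Definition scycle (k s m n : nat) : {set {set 'I_n}} :=
  [set scycle_edge k s n j | j : 'I_m].

Definition tight3cycle (n : nat) : {set {set 'I_n}} := scycle 3 2 n n.

Definition hdeg n (E : {set {set 'I_n}}) (i : 'I_n) : nat :=
  #|[set e in E | i \in e]|.

Definition hmaxdeg n (E : {set {set 'I_n}}) : nat := (\max_(i : 'I_n) hdeg E i)%N.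

Definition lap_H_eig (R : realType) (k n : nat) (E : {set {set 'I_n}}) (lam : R) : Prop :=
  exists x : 'I_n -> R, (exists i, x i != 0) /\
    forall i : 'I_n,
      lam * x i ^+ k.-1 =
        (hdeg E i)%:R * x i ^+ k.-1 - \sum_(e in E | i \in e) \prod_(j in e :\ i) x j.

Definition largest_lap_H_eig (R : realType) (k n : nat) (E : {set {set 'I_n}}) (lam : R) : Prop :=
  lap_H_eig k E lam /\ forall mu : R, lap_H_eig k E mu -> mu <= lam.

(* Main.v *)
Require Import Defs.
From mathcomp Require Import all_boot all_order all_algebra.
From mathcomp Require Import reals.
From mathcomp Require Import zify ring lra.
Import Order.TTheory GRing.Theory Num.Theory.
Section Comb.
Variable n : nat.
Hypothesis hn : 4 <= n.
Let npos : 0 < n. Proof. by lia. Qed.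

Definition vv (a : nat) : 'I_n := Ordinal (ltn_pmod a npos).

Lemma vE a : val (vv a) = a %% n. Proof. by []. Qed.
Lemma vi (i : 'I_n) : vv i = i.
Proof. by apply: val_inj; rewrite vE modn_small. Qed.
Lemma veq a b : (vv a == vv b) = (a %% n == b %% n). Proof. by []. Qed.
Lemma oveq (i : 'I_n) b : (i == vv b) = (i %% n == b %% n).
Proof. by rewrite -{1}(vi i) veq. Qed.
Lemma voeq (i : 'I_n) b : (vv b == i) = (b %% n == i %% n).
Proof. by rewrite eq_sym oveq eq_sym. Qed.
Lemma ooeq (i j : 'I_n) : (i == j) = (i %% n == j %% n).
Proof. by rewrite -{1}(vi j) oveq. Qed.

Lemma mod3 a : a < 3 * n ->
  [\/ a < n /\ a %% n = a, n <= a < 2 * n /\ a %% n = a - n |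
      2 * n <= a /\ a %% n = a - 2 * n].
Proof.
move=> h; have q3 : a %/ n < 3 by rewrite ltn_divLR // mulnC.
have e := divn_eq a n; have lt := ltn_pmod a npos.
move: q3 e lt; move: (a %/ n) (a %% n) => q r.
case: q => [|[|[|q]]] //= _ e lt.
- by constructor 1; lia.
- by constructor 2; lia.
- by constructor 3; lia.
Qed.

Lemma eqmodE a b : a < 3 * n -> b < 3 * n ->
  (a %% n == b %% n) = [|| a == b, a == b + n, b == a + n, a == b + 2 * n | b == a + 2 * n].
Proof.
move=> ha hb; case: (@mod3 a ha) => -[h1 ->]; case: (@mod3 b hb) => -[h2 ->]; lia.
Qed.

Definition edge j := scycle_edge 3 2 n j.
Lemma edge_eq j : edge j = [set vv j.+1; vv j.+2; vv j.+3].
Proof.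
apply/setP=> y; rewrite /edge /scycle_edge !inE muln1.
apply/existsP/idP.
- case=> -[t ht] /= /eqP e.
  rewrite !oveq (modn_small (ltn_ord y)) -e.
  case: t ht e => [|[|[|t]]] // _ e.
  by rewrite addn1 eqxx.
  by rewrite addn2 eqxx orbT.
  by rewrite addn3 eqxx orbT.
- rewrite -?orbA; case/or3P=> /eqP ->.
  + by exists (Ordinal (isT : 0 < 3)); rewrite /= addn1.
  + by exists (Ordinal (isT : 1 < 3)); rewrite /= addn2.
  + by exists (Ordinal (isT : 2 < 3)); rewrite /= addn3.
Qed.

Lemma edge_cong a b : a %% n = b %% n -> edge a = edge b.
Proof.
move=> e; have h k : vv (a + k) = vv (b + k).
  by apply: val_inj; rewrite /= -modnDml e modnDml.
by rewrite !edge_eq -[a.+3]addn3 -[a.+2]addn2 -[a.+1]addn1 -[b.+3]addn3 -[b.+2]addn2 -[b.+1]addn1 !h.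
Qed.

Lemma edge_in a : edge a \in tight3cycle n.
Proof.
rewrite (@edge_cong a (vv a)); last by rewrite /= modn_mod.
by apply: imset_f.
Qed.


Ltac splitH := repeat match goal with H : is_true (_ && _) |- _ => case/andP: H => ? ? end;
  repeat match goal with H : is_true (_ || _) |- _ => case/orP: H => H end;
  repeat match goal with H : is_true (~~ (_ == _)) |- _ => move/eqP: H => H end;
  repeat match goal with H : is_true (_ == _) |- _ => move/eqP: H => H end.
Ltac solve_or := lazymatch goal with
 | |- is_true (_ || _) => apply/orP; first [left; solve_or | right; solve_or]
 | |- is_true (~~ (_ || _)) => rewrite negb_or; apply/andP; split; solve_or
 | |- is_true (~~ (_ == _)) => apply/eqP => ?; lia
 | |- is_true (_ == _) => apply/eqP; lia
 | |- is_true (_ && _) => apply/andP; split; solve_or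
 | |- _ => lia end.
Ltac dec := rewrite ?edge_eq !inE ?veq ?oveq ?voeq ?ooeq !eqmodE; try (intros; splitH; solve_or).

Lemma vset (i : 'I_n) : [set e in tight3cycle n | i \in e] =
  [set edge (i + n - 1); edge (i + n - 2); edge (i + n - 3)].
Proof.
have hi := ltn_ord i.
apply/setP=> e; rewrite !inE; apply/andP/idP.
- case=> /imsetP [j _ ->] Hi; have hj := ltn_ord j.
  have : [|| j %% n == (i+n-1) %% n, j%%n == (i+n-2)%%n | j %%n == (i+n-3)%%n].
    move: Hi; rewrite -/(edge j). Time dec.
  change (scycle_edge 3 2 n j) with (edge j).
  by case/or3P => /eqP /edge_cong ->; rewrite eqxx ?orbT.
- case/orP => [/orP[]|] /eqP ->; split; try exact: edge_in; dec.
Qed.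

Lemma neq_wit (T : finType) (S S' : {set T}) x : x \in S -> x \notin S' -> S != S'.
Proof. by move=> h1 h2; apply: contraNneq h2 => <-. Qed.

Lemma vset_dist (i : 'I_n) :
  [/\ edge (i + n - 1) != edge (i + n - 2), edge (i + n - 1) != edge (i + n - 3)
    & edge (i + n - 2) != edge (i + n - 3)].
Proof.
have hi := ltn_ord i.
split; rewrite eq_sym.
- by apply: (@neq_wit _ _ _ (vv (i + n - 1))); dec.
- by apply: (@neq_wit _ _ _ (vv (i + n - 1))); dec.
- by apply: (@neq_wit _ _ _ (vv (i + n - 2))); dec.
Qed.

Lemma card3 (T : finType) (a b c : T) : a != b -> a != c -> b != c -> #|[set a; b; c]| = 3.
Proof.
have -> : [set a; b; c] = a |: [set b; c] by apply/setP=> x; rewrite !inE orbA.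
by move=> ab ac bc; rewrite cardsU1 cards2 !inE negb_or ab ac bc. Qed.

Lemma hdeg3 (i : 'I_n) : hdeg (tight3cycle n) i = 3.
Proof. by rewrite /hdeg vset; case: (vset_dist i) => *; apply: card3. Qed.

Lemma hmax3 : hmaxdeg (tight3cycle n) = 3.
Proof.
apply/eqP; rewrite eqn_leq; apply/andP; split.
- by apply/bigmax_leqP => i _; rewrite hdeg3.
- by rewrite -(hdeg3 (Ordinal npos)); apply: (@leq_bigmax_cond _ xpredT).
Qed.

Lemma sum3 (V : nmodType) (T : finType) (a b c : T) (F : T -> V) :
  a != b -> a != c -> b != c -> (\sum_(x in [set a; b; c]) F x = F a + F b + F c)%R.
Proof.
have -> : [set a; b; c] = a |: [set b; c] by apply/setP=> x; rewrite !inE orbA.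
move=> ab ac bc; rewrite big_setU1 /=; last by rewrite !inE negb_or ab ac.
by rewrite big_setU1 /= ?inE // big_set1 GRing.addrA.
Qed.

Lemma prod2 (V : comNzRingType) (T : finType) (a b : T) (F : T -> V) :
  a != b -> (\prod_(x in [set a; b]) F x = F a * F b)%R.
Proof. by move=> ab; rewrite big_setU1 /= ?inE // big_set1. Qed.

Lemma vert_sum (V : nmodType) (i : 'I_n) (G : {set 'I_n} -> V) :
  (\sum_(e in tight3cycle n | i \in e) G e =
   G (edge (i + n - 1)) + G (edge (i + n - 2)) + G (edge (i + n - 3)))%R.
Proof.
rewrite (eq_bigl (mem [set e in tight3cycle n | i \in e])); last first.
  by move=> e /=; rewrite [RHS]inE; reflexivity.
by rewrite vset; case: (vset_dist i) => *; apply: sum3.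
Qed.

Lemma setA (i : 'I_n) : edge (i + n - 1) :\ i = [set vv (i + 1); vv (i + 2)].
Proof. have hi := ltn_ord i; apply/setP => y; have hy := ltn_ord y; rewrite ?edge_eq !inE ?veq ?oveq ?voeq ?ooeq !eqmodE; try (apply/idP/idP => H; splitH; solve_or); lia. Qed.
Lemma setB (i : 'I_n) : edge (i + n - 2) :\ i = [set vv (i + n - 1); vv (i + 1)].
Proof. have hi := ltn_ord i; apply/setP => y; have hy := ltn_ord y; rewrite ?edge_eq !inE ?veq ?oveq ?voeq ?ooeq !eqmodE; try (apply/idP/idP => H; splitH; solve_or); lia. Qed.
Lemma setC (i : 'I_n) : edge (i + n - 3) :\ i = [set vv (i + n - 2); vv (i + n - 1)].
Proof. have hi := ltn_ord i; apply/setP => y; have hy := ltn_ord y; rewrite ?edge_eq !inE ?veq ?oveq ?voeq ?ooeq !eqmodE; try (apply/idP/idP => H; splitH; solve_or); lia. Qed.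
End Comb.

Local Open Scope ring_scope.

Section Ana.
Variable R : realType.

Lemma setm (T : finType) (a b c : T) : a != b -> a != c -> b != c ->
  [/\ [set a; b; c] :\ a = [set b; c], [set a; b; c] :\ b = [set a; c]
    & [set a; b; c] :\ c = [set a; b]].
Proof.
move=> ab ac bc.
have e1 : [set a; b; c] = a |: [set b; c].
  by apply/setP=> y; rewrite !inE; case: (y == a); case: (y == b); case: (y == c).
have e2 : [set a; b; c] = b |: [set a; c].
  by apply/setP=> y; rewrite !inE; case: (y == a); case: (y == b); case: (y == c).
have e3 : [set a; b; c] = c |: [set a; b].
  by apply/setP=> y; rewrite !inE; case: (y == a); case: (y == b); case: (y == c).
split; [rewrite e1 | rewrite e2 | rewrite e3]; apply: setU1K; rewrite !inE negb_or.
- by rewrite ab ac.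
- by rewrite eq_sym ab bc.
- by rewrite eq_sym ac eq_sym bc.
Qed.

Lemma edge3 (T : finType) (a b c : T) (x : T -> R) : a != b -> a != c -> b != c ->
  2 * (\sum_(i in [set a; b; c]) \prod_(y in [set a; b; c] :\ i) x y) =
  (\sum_(i in [set a; b; c]) x i) ^+ 2 - \sum_(i in [set a; b; c]) x i ^+ 2.
Proof.
move=> ab ac bc; rewrite !sum3 //; case: (@setm _ a b c ab ac bc) => -> -> ->.
rewrite !prod2 //; ring.
Qed.

Lemma exch n (E : {set {set 'I_n}}) (F : 'I_n -> {set 'I_n} -> R) :
  \sum_i \sum_(e in E | i \in e) F i e = \sum_(e in E) \sum_(i in e) F i e.
Proof.
under eq_bigr => i _ do rewrite big_mkcondr.
rewrite exchange_big; apply: eq_bigr => e _.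
by rewrite [RHS]big_mkcond.
Qed.

Lemma sumsq_pos n (x : 'I_n -> R) i0 : x i0 != 0 -> 0 < \sum_i x i ^+ 2.
Proof.
move=> h; rewrite (bigD1 i0) //=.
have h1 : 0 < x i0 ^+ 2 by rewrite lt_neqAle eq_sym sqrf_eq0 h sqr_ge0.
have h2 : 0 <= \sum_(i | i != i0) x i ^+ 2 by apply: sumr_ge0 => i _; exact: sqr_ge0.
lra.
Qed.

Lemma vert_prod n (hn : (3 < n)%N) (i : 'I_n) (x : 'I_n -> R) :
  \sum_(e in tight3cycle n | i \in e) \prod_(j in e :\ i) x j =
  x (vv n hn (i + 1)) * x (vv n hn (i + 2)) + x (vv n hn (i + n - 1)) * x (vv n hn (i + 1))
  + x (vv n hn (i + n - 2)) * x (vv n hn (i + n - 1)).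
Proof.
have hi := ltn_ord i.
rewrite (vert_sum _ hn) (setA _ hn) (setB _ hn) (setC _ hn) !prod2 //;
  rewrite (veq _ hn) (eqmodE _ hn); lia.
Qed.

Lemma eig_sum n (hn : (3 < n)%N) (x : 'I_n -> R) lam :
  (forall i, lam * x i ^+ 3.-1 = (hdeg (tight3cycle n) i)%:R * x i ^+ 3.-1 -
     \sum_(e in tight3cycle n | i \in e) \prod_(j in e :\ i) x j) ->
  lam * \sum_i x i ^+ 2 = 3 * \sum_i x i ^+ 2 -
     \sum_i \sum_(e in tight3cycle n | i \in e) \prod_(j in e :\ i) x j.
Proof.
move=> H.
have : \sum_i lam * x i ^+ 2 = \sum_i (3 * x i ^+ 2 -
     \sum_(e in tight3cycle n | i \in e) \prod_(j in e :\ i) x j).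
  by apply: eq_bigr => i _; have := H i; rewrite (hdeg3 _ hn).
by rewrite -mulr_sumr big_split /= -mulr_sumr sumrN.
Qed.

Lemma W_eq n (hn : (3 < n)%N) (x : 'I_n -> R) :
  2 * \sum_i \sum_(e in tight3cycle n | i \in e) \prod_(j in e :\ i) x j =
  \sum_(e in tight3cycle n) (\sum_(i in e) x i) ^+ 2 - 3 * \sum_i x i ^+ 2.
Proof.
rewrite exch [LHS]mulr_sumr.
have -> : \sum_(e in tight3cycle n) 2 * \sum_(i in e) \prod_(j in e :\ i) x j =
   \sum_(e in tight3cycle n) ((\sum_(i in e) x i) ^+ 2 - \sum_(i in e) x i ^+ 2).
  apply: eq_bigr => e /imsetP [j _ ->]; have hj := ltn_ord j.
  change (scycle_edge 3 2 n j) with (edge n j); rewrite (edge_eq _ hn).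
  by apply: edge3; rewrite (veq _ hn) (eqmodE _ hn); lia.
rewrite sumrB; congr (_ - _).
rewrite -(@exch n (tight3cycle n) (fun i e => x i ^+ 2)) mulr_sumr; apply: eq_bigr => i _.
by rewrite (vert_sum _ hn); ring.
Qed.

Lemma part3 n (hn : (3 < n)%N) (lam : R) : lap_H_eig 3 (tight3cycle n) lam -> lam <= 9 / 2.
Proof.
case=> x [[i0 hi0] H].
have hQ := @sumsq_pos n x i0 hi0.
have e1 := @eig_sum n hn x lam H; have e2 := @W_eq n hn x.
have hS : 0 <= \sum_(e in tight3cycle n) (\sum_(i in e) x i) ^+ 2.
  by apply: sumr_ge0 => e _; exact: sqr_ge0.
rewrite -(ler_pM2r hQ); lra.
Qed.

Definition h4 : (3 < 4)%N := isT.

Lemma sum4 (F : 'I_4 -> R) :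
  \sum_i F i = F (vv 4 h4 0) + F (vv 4 h4 1) + F (vv 4 h4 2) + F (vv 4 h4 3).
Proof.
rewrite !big_ord_recr big_ord0 /= add0r.
by congr (F _ + F _ + F _ + F _); apply: val_inj.
Qed.

Ltac normv := repeat match goal with |- context [vv 4 ?h ?a] =>
  lazymatch a with 0%N => fail | 1%N => fail | 2%N => fail | 3%N => fail | _ =>
    let b := eval vm_compute in (a %% 4)%N in
    rewrite (_ : vv 4 h a = vv 4 h b); last by apply: val_inj end end.

Lemma part2_ub (lam : R) : lap_H_eig 3 (tight3cycle 4) lam -> lam <= 4.
Proof.
case=> x [[i0 hi0] H].
have hQ := @sumsq_pos 4 x i0 hi0.
have e1 := @eig_sum 4 h4 x lam H.
have eW : \sum_i \sum_(e in tight3cycle 4 | i \in e) \prod_(j in e :\ i) x j =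
   (\sum_i x i) ^+ 2 - \sum_i x i ^+ 2.
  under eq_bigr => i _ do rewrite (@vert_prod 4 h4).
  rewrite !sum4; normv; ring.
have hT : 0 <= (\sum_i x i) ^+ 2 by exact: sqr_ge0.
rewrite -(ler_pM2r hQ); lra.
Qed.

Definition x4 (i : 'I_4) : R := if (val i < 2)%N then 1 else -1.

Lemma part2_eig : lap_H_eig 3 (tight3cycle 4) (4 : R).
Proof.
exists x4; split.
  by exists (vv 4 h4 0); rewrite /x4 /= oner_neq0.
move=> i; rewrite (hdeg3 _ h4) (@vert_prod 4 h4) -[x4 i](congr1 x4 (vi _ h4 i)).
case: i => [[|[|[|[|k]]]] hk] //; normv;
  rewrite /x4 /=; ring.
Qed.
End Ana.

Theorem proposition8p2 (R : realType) (n : nat) (hn : (4 <= n)%N) :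
  hmaxdeg (tight3cycle n) = 3%N /\
  (n = 4%N -> largest_lap_H_eig 3 (tight3cycle n) (4 : R)) /\
  ((5 <= n)%N -> forall mu : R, lap_H_eig 3 (tight3cycle n) mu -> mu <= 9 / 2).
Proof.
have hn' : (3 < n)%N by [].
split; first exact: hmax3 _ hn'.
split.
- move=> e4; subst n; split; [exact: part2_eig | exact: part2_ub].
- by move=> _; exact: part3 hn'.
Qed.
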